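(* If $0\ne x\in J$ is separated by partitions, then $\{\{n\}\}_{n\in\mathrm{supp}(x)}$ is an $x$-norming partition. Hence $\|x\|_J=\|x\|_2$.
   Context: For a real sequence $x=(x(n))_{n\in\mathbb N}$ let $\|x\|_J=\sup\bigl(\sum_{i=1}^n|\sum_{k\in I_i}x(k)|^2\bigr)^{1/2}$ over all $n$ and all families of pairwise disjoint intervals $I_1,\dots,I_n$ of $\mathbb N$ (intervals: nonempty sets of consecutive positive integers, possibly infinite). $J=\{x:\|x\|_J<\infty\}$; $\|x\|_2$ is the $\ell_2$ norm; for $x\in J$ and any interval $I$ the series $\sum_{k\in I}x(k)$ converges. $\mathrm{supp}(x)=\{n:x(n)\ne0\}$. A family of intervals $\mathcal I=\{I_i\}_{i\in F}$: $F=\{1,\dots,k\}$ or $F=\mathbb N$, each $I_i$ an interval, $\max I_i<\min I_{i+1}$ whenever $i+1\in F$; $\|x\|_{\mathcal I}=(\sum_{i\in F}|\sum_{k\in I_i}x(k)|^2)^{1/2}$; it is $x$-norming if $\|x\|_{\mathcal I}=\|x\|_J$. For nonempty $L\subset\mathbb N$, $\sup L=\max L$ if finite and $\infty$ otherwise. An $x$-norming partition is an $x$-norming family with $\{\min I_i,\max I_i\}\subset\mathrm{supp}(x)$ for all $i<\sup F$, and, if $F$ is finite, $\min I_i\in\mathrm{supp}(x)$ and $\sup I_i=\sup\mathrm{supp}(x)$ for $i=\sup F$. A vector $x\in J$ is separated by partitions if for any two consecutive elements $n_1<n_2$ of $\mathrm{supp}(x)$ there exists an $x$-norming partition in which $n_1$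 and $n_2$ belong to different intervals. *)

(* Defs.v *)
From Stdlib Require Import Reals List Arith Lia.
From Coquelicot Require Import Coquelicot.
Open Scope R_scope.

(* Sequences x = (x(n)) indexed by nat (positions 0,1,2,... play the role of
   the paper's 1,2,3,...). *)
Definition seqR := nat -> R.

(* An interval of nat: {lo, lo+1, ..., hi} (hi = Some m, requires lo <= m)
   or {lo, lo+1, ...} (hi = None). *)
Record interval := mkInterval { lo : nat; hi : option nat }.

Definition valid_interval (I : interval) : Prop :=
  match hi I with Some m => (lo I <= m)%nat | None => True end.

Definition in_interval (I : interval) (k : nat) : Prop :=
  (lo I <= k)%nat /\ match hi I with Some m => (k <= m)%nat | None => True end.

Definition fsum (f : nat -> R) (a b : nat) : R :=
  fold_right Rplus 0 (map f (List.seq a (S b - a))).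

(* sum_{k in I} x(k); for infinite I this is the series (Coquelicot's total
   Series, which is the actual sum whenever the series converges, e.g. x in J). *)
Definition isum (x : seqR) (I : interval) : R :=
  match hi I with
  | Some m => fsum x (lo I) m
  | None => Series (fun n => x (lo I + n)%nat)
  end.

Definition disjoint_intervals (I1 I2 : interval) : Prop :=
  forall k, ~ (in_interval I1 k /\ in_interval I2 k).

Definition pairwise_disjoint (l : list interval) : Prop :=
  forall i j d, (i < length l)%nat -> (j < length l)%nat -> i <> j ->
    disjoint_intervals (nth i l d) (nth j l d).

Definition normJ (x : seqR) : Rbar :=
  Lub_Rbar (fun r => exists l : list interval,
    l <> nil /\ List.Forall valid_interval l /\ pairwise_disjoint l /\
    r = sqrt (fold_right (fun I acc => (Rabs (isum x I))^2 + acc) 0 l)).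

Definition inJ (x : seqR) : Prop := is_finite (normJ x).

Definition norm2 (x : seqR) : Rbar :=
  Lub_Rbar (fun r => exists m, r = sqrt (fsum (fun k => (x k)^2) 0 m)).

Definition supp (x : seqR) (n : nat) : Prop := x n <> 0.

Definition sup_nat (L : nat -> Prop) : Rbar :=
  Lub_Rbar (fun r => exists n, L n /\ r = INR n).

Definition sup_interval (I : interval) : Rbar :=
  match hi I with Some m => Finite (INR m) | None => p_infty end.

(* A ifamily of intervals {I_i}_{i in F}; index set F = {0,...,k-1} (fF = Some k,
   k >= 1) or F = nat (fF = None). *)
Record ifamily := mkFamily { fF : option nat; fI : nat -> interval }.

Definition inF (P : ifamily) (i : nat) : bool :=
  match fF P with Some k => Nat.ltb i k | None => true end.

Definition is_family (P : ifamily) : Prop :=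
  (forall k, fF P = Some k -> (1 <= k)%nat) /\
  (forall i, inF P i = true -> valid_interval (fI P i)) /\
  (forall i, inF P (S i) = true ->
     exists m, hi (fI P i) = Some m /\ (m < lo (fI P (S i)))%nat).

Definition normI (x : seqR) (P : ifamily) : Rbar :=
  Lub_Rbar (fun r => exists m, r = sqrt (fsum (fun i =>
      if inF P i then (Rabs (isum x (fI P i)))^2 else 0) 0 m)).

Definition x_norming (x : seqR) (P : ifamily) : Prop :=
  is_family P /\ normI x P = normJ x.

Definition x_norming_partition (x : seqR) (P : ifamily) : Prop :=
  x_norming x P /\
  (forall i, inF P (S i) = true ->
     supp x (lo (fI P i)) /\
     exists m, hi (fI P i) = Some m /\ supp x m) /\
  (forall k, fF P = Some k ->
     supp x (lo (fI P (k - 1))) /\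
     sup_interval (fI P (k - 1)) = sup_nat (supp x)).

Definition separated_by_partitions (x : seqR) : Prop :=
  forall n1 n2, supp x n1 -> supp x n2 -> (n1 < n2)%nat ->
    (forall n, (n1 < n < n2)%nat -> ~ supp x n) ->
    exists P, x_norming_partition x P /\
      exists i j, inF P i = true /\ inF P j = true /\ i <> j /\
        in_interval (fI P i) n1 /\ in_interval (fI P j) n2.

(* Main.v *)
Require Import Defs.
From Stdlib Require Import Reals List Arith Lia Lra Psatz Classical ClassicalEpsilon.
From Coquelicot Require Import Coquelicot.
Open Scope R_scope.

Definition sumlist (l : list R) : R := fold_right Rplus 0 l.

Lemma sumlist_app l1 l2 : sumlist (l1 ++ l2) = sumlist l1 + sumlist l2.
Proof. induction l1; simpl; [lra|]. unfold sumlist in *; simpl; rewrite IHl1; lra. Qed.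

Lemma fsum_eq f a b : fsum f a b = sumlist (map f (List.seq a (S b - a))).
Proof. reflexivity. Qed.

Lemma fsum_empty f a b : (b < a)%nat -> fsum f a b = 0.
Proof. intros H. unfold fsum. replace (S b - a)%nat with 0%nat by lia. reflexivity. Qed.

Lemma fsum_split f a b c : (a <= S b)%nat -> (b <= c)%nat ->
  fsum f a c = fsum f a b + fsum f (S b) c.
Proof.
  intros H1 H2. rewrite !fsum_eq.
  replace (S c - a)%nat with ((S b - a) + (S c - S b))%nat by lia.
  rewrite seq_app, map_app, sumlist_app.
  replace (a + (S b - a))%nat with (S b) by lia. reflexivity.
Qed.

Lemma fsum_single f a : fsum f a a = f a.
Proof. unfold fsum. replace (S a - a)%nat with 1%nat by lia. simpl. lra. Qed.

Lemma fsum_last f a b : (a <= S b)%nat -> fsum f a (S b) = fsum f a b + f (S b).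
Proof. intros H. rewrite (fsum_split f a b (S b)) by lia. rewrite fsum_single. lra. Qed.

Lemma fsum_first f a b : (a <= b)%nat -> fsum f a b = f a + fsum f (S a) b.
Proof.
  intros H. destruct (Nat.eq_dec a b).
  - subst. rewrite fsum_single, fsum_empty by lia. lra.
  - rewrite (fsum_split f a a b) by lia. rewrite fsum_single. lra.
Qed.

Lemma sumlist_map_ext {A} (f g : A -> R) l : (forall k, In k l -> f k = g k) ->
  sumlist (map f l) = sumlist (map g l).
Proof. intros H. f_equal. apply map_ext_in. auto. Qed.

Lemma fsum_ext f g a b : (forall k, (a <= k <= b)%nat -> f k = g k) ->
  fsum f a b = fsum g a b.
Proof.
  intros H. rewrite !fsum_eq. apply sumlist_map_ext. intros k Hk.
  apply in_seq in Hk. apply H. lia.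
Qed.

Lemma sumlist_map_le {A} (f g : A -> R) l : (forall k, In k l -> f k <= g k) ->
  sumlist (map f l) <= sumlist (map g l).
Proof.
  induction l; simpl; intros H; unfold sumlist in *; simpl; [lra|].
  specialize (IHl (fun k Hk => H k (or_intror Hk))). specialize (H a (or_introl eq_refl)). lra.
Qed.

Lemma fsum_le f g a b : (forall k, f k <= g k) -> fsum f a b <= fsum g a b.
Proof. intros H. rewrite !fsum_eq. apply sumlist_map_le. auto. Qed.

Lemma sumlist_map_nonneg {A} (f : A -> R) l : (forall k, 0 <= f k) -> 0 <= sumlist (map f l).
Proof. induction l; simpl; intros H; unfold sumlist in *; simpl; [lra|]. specialize (IHl H). specialize (H a). lra. Qed.

Lemma fsum_nonneg f a b : (forall k, 0 <= f k) -> 0 <= fsum f a b.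
Proof. intros H. rewrite fsum_eq. apply sumlist_map_nonneg; auto. Qed.

Lemma sumlist_map_plus {A} (f g : A -> R) l :
  sumlist (map (fun k => f k + g k) l) = sumlist (map f l) + sumlist (map g l).
Proof. induction l; unfold sumlist in *; simpl; [lra|]. rewrite IHl. lra. Qed.

Lemma fsum_plus f g a b : fsum (fun k => f k + g k) a b = fsum f a b + fsum g a b.
Proof. rewrite !fsum_eq. apply sumlist_map_plus. Qed.

Lemma sumlist_map_zero {A} (l : list A) : sumlist (map (fun _ => 0) l) = 0.
Proof. induction l; unfold sumlist in *; simpl; [lra|]. rewrite IHl. lra. Qed.

Lemma fsum_zero a b : fsum (fun _ => 0) a b = 0.
Proof. rewrite fsum_eq. apply sumlist_map_zero. Qed.

Lemma fsum_mono_r f a b b' : (forall k, 0 <= f k) -> (b <= b')%nat -> fsum f a b <= fsum f a b'.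
Proof.
  intros H Hb. destruct (le_lt_dec a (S b)).
  - rewrite (fsum_split f a b b') by lia. pose proof (fsum_nonneg f (S b) b' H). lra.
  - rewrite fsum_empty by lia. apply fsum_nonneg; auto.
Qed.

Lemma fsum_opp_zero f a b : (forall k, (a <= k <= b)%nat -> f k = 0) -> fsum f a b = 0.
Proof. intros H. rewrite (fsum_ext f (fun _ => 0)) by auto. apply fsum_zero. Qed.

Definition V (x : seqR) (l : list interval) : R :=
  fold_right (fun I acc => (Rabs (isum x I))^2 + acc) 0 l.

Lemma V_cons x I l : V x (I :: l) = (Rabs (isum x I))^2 + V x l.
Proof. reflexivity. Qed.

Lemma V_nil x : V x nil = 0.
Proof. reflexivity. Qed.

Lemma V_app x l1 l2 : V x (l1 ++ l2) = V x l1 + V x l2.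
Proof. induction l1; simpl app; [rewrite V_nil; lra|]. rewrite !V_cons, IHl1. lra. Qed.

Lemma V_nonneg x l : 0 <= V x l.
Proof. induction l; [rewrite V_nil; lra|]. rewrite V_cons. pose proof (pow2_ge_0 (Rabs (isum x a))). lra. Qed.

Lemma V_map {A} x (h : A -> interval) L :
  V x (map h L) = sumlist (map (fun i => (Rabs (isum x (h i)))^2) L).
Proof. induction L; simpl map; [reflexivity|]. rewrite V_cons, IHL. reflexivity. Qed.

Lemma disjoint_sym I J : disjoint_intervals I J -> disjoint_intervals J I.
Proof. unfold disjoint_intervals. intros H k [H1 H2]. apply (H k); auto. Qed.

Lemma disjoint_lt I J m : hi I = Some m -> (m < lo J)%nat -> disjoint_intervals I J.
Proof.
  unfold disjoint_intervals, in_interval. intros H1 H2 k [[_ A] [B _]]. rewrite H1 in A. lia.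
Qed.

Lemma PD_nil : pairwise_disjoint nil.
Proof. intros i j d Hi. simpl in Hi. lia. Qed.

Lemma PD_cons I l : (forall J, In J l -> disjoint_intervals I J) -> pairwise_disjoint l ->
  pairwise_disjoint (I :: l).
Proof.
  intros H1 H2 i j d Hi Hj Hij. simpl in Hi, Hj.
  destruct i as [|i], j as [|j]; simpl.
  - lia.
  - apply H1. apply nth_In. lia.
  - apply disjoint_sym, H1. apply nth_In. lia.
  - apply H2; lia.
Qed.

Lemma PD_cons_inv I l : pairwise_disjoint (I :: l) ->
  pairwise_disjoint l /\ (forall J, In J l -> disjoint_intervals I J).
Proof.
  intros H. split.
  - intros i j d Hi Hj Hij. apply (H (S i) (S j) d); simpl; lia.
  - intros J HJ. destruct (In_nth l J I HJ) as [n [Hn Hnth]].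
    rewrite <- Hnth. apply (H 0%nat (S n) I); simpl; lia.
Qed.

Lemma PD_app l1 l2 : pairwise_disjoint l1 -> pairwise_disjoint l2 ->
  (forall I J, In I l1 -> In J l2 -> disjoint_intervals I J) ->
  pairwise_disjoint (l1 ++ l2).
Proof.
  induction l1 as [|I l1 IH]; simpl; intros H1 H2 H3; auto.
  apply PD_cons_inv in H1 as [H1a H1b]. apply PD_cons.
  - intros J HJ. apply in_app_or in HJ as [HJ|HJ]; auto.
  - apply IH; auto.
Qed.

Lemma inF_down P i j : inF P j = true -> (i <= j)%nat -> inF P i = true.
Proof.
  unfold inF. destruct (fF P); auto. intros H1 H2. apply Nat.ltb_lt in H1. apply Nat.ltb_lt. lia.
Qed.

Lemma fam_valid P i : is_family P -> inF P i = true -> valid_interval (fI P i).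
Proof. intros [_ [H _]]. auto. Qed.

Lemma fam_order P i j : is_family P -> (i < j)%nat -> inF P j = true ->
  exists m, hi (fI P i) = Some m /\ (m < lo (fI P j))%nat.
Proof.
  intros HP. induction j as [|j IH]; intros Hij Hj; [lia|].
  destruct HP as [H0 [H1 H2]].
  destruct (H2 j Hj) as [m [Hm1 Hm2]].
  destruct (Nat.eq_dec i j) as [->|Hne]; [eauto|].
  assert (Hj' : inF P j = true) by (apply (inF_down P j (S j)); auto).
  destruct (IH ltac:(lia) Hj') as [m' [Hm'1 Hm'2]].
  exists m'. split; auto. pose proof (H1 j Hj') as Hv. unfold valid_interval in Hv.
  rewrite Hm1 in Hv. lia.
Qed.

Lemma fam_disj P i j : is_family P -> inF P i = true -> inF P j = true -> i <> j ->
  disjoint_intervals (fI P i) (fI P j).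
Proof.
  intros HP Hi Hj Hij. destruct (Nat.lt_total i j) as [H|[H|H]]; [|lia|].
  - destruct (fam_order P i j HP H Hj) as [m [Hm1 Hm2]]. eapply disjoint_lt; eauto.
  - destruct (fam_order P j i HP H Hi) as [m [Hm1 Hm2]]. apply disjoint_sym. eapply disjoint_lt; eauto.
Qed.

Lemma fam_lo_ge P j : is_family P -> inF P j = true -> (j <= lo (fI P j))%nat.
Proof.
  intros HP. induction j as [|j IH]; intros Hj; [lia|].
  assert (Hj' : inF P j = true) by (apply (inF_down P j (S j)); auto).
  destruct (fam_order P j (S j) HP ltac:(lia) Hj) as [m [Hm1 Hm2]].
  pose proof (fam_valid P j HP Hj') as Hv. unfold valid_interval in Hv. rewrite Hm1 in Hv.
  specialize (IH Hj'). lia.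
Qed.

Lemma PD_map_fam P L : is_family P -> NoDup L -> (forall j, In j L -> inF P j = true) ->
  pairwise_disjoint (map (fI P) L).
Proof.
  intros HP. induction L as [|j L IH]; intros HN HL; simpl; [apply PD_nil|].
  inversion HN; subst. apply PD_cons.
  - intros J HJ. apply in_map_iff in HJ as [j' [<- Hj']]. apply fam_disj; auto.
    + apply HL; simpl; auto.
    + apply HL; simpl; auto.
    + intros ->. contradiction.
  - apply IH; auto. intros; apply HL; simpl; auto.
Qed.

Lemma Forall_valid_map_fam P L : is_family P -> (forall j, In j L -> inF P j = true) ->
  List.Forall valid_interval (map (fI P) L).
Proof.
  intros HP HL. apply List.Forall_forall. intros I HI. apply in_map_iff in HI as [j [<- Hj]].
  apply fam_valid; auto.
Qed.

Lemma normJ_ub x N l : normJ x = Finite N -> l <> nil -> List.Forall valid_interval l ->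
  pairwise_disjoint l -> sqrt (V x l) <= N.
Proof.
  intros HN Hl Hv Hd. unfold normJ in HN.
  match type of HN with Lub_Rbar ?E = _ => pose proof (Lub_Rbar_correct E) as [HL _]; rewrite HN in HL end.
  apply (HL (sqrt (V x l))). exists l. repeat split; auto.
Qed.

Lemma normJ_nonneg x N : normJ x = Finite N -> 0 <= N.
Proof.
  intros HN. eapply Rle_trans; [apply sqrt_pos|].
  apply (normJ_ub x N (mkInterval 0%nat (Some 0%nat) :: nil)); auto.
  - discriminate.
  - repeat constructor.
  - apply PD_cons; [intros J []|apply PD_nil].
Qed.

Lemma VJ x N l : normJ x = Finite N -> List.Forall valid_interval l ->
  pairwise_disjoint l -> V x l <= N ^ 2.
Proof.
  intros HN Hv Hd. pose proof (normJ_nonneg x N HN).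
  destruct l as [|I l].
  - rewrite V_nil. nra.
  - pose proof (normJ_ub x N (I :: l) HN ltac:(discriminate) Hv Hd) as H1.
    pose proof (V_nonneg x (I :: l)). rewrite <- (pow2_sqrt (V x (I :: l))) by auto.
    pose proof (sqrt_pos (V x (I :: l))). nra.
Qed.

Definition gP x P i := (Rabs (isum x (fI P i)))^2.
Definition partial x P m := fsum (fun i => if inF P i then (Rabs (isum x (fI P i)))^2 else 0) 0 m.

Lemma partial_nonneg x P m : 0 <= partial x P m.
Proof. apply fsum_nonneg. intros k. destruct (inF P k); [apply pow2_ge_0|lra]. Qed.

Lemma partial_mono x P m m' : (m <= m')%nat -> partial x P m <= partial x P m'.
Proof. intros H. apply fsum_mono_r; auto. intros k. destruct (inF P k); [apply pow2_ge_0|lra]. Qed.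

Lemma partial_inF x P m : inF P m = true -> partial x P m = fsum (gP x P) 0 m.
Proof.
  intros H. apply fsum_ext. intros k Hk. rewrite (inF_down P k m H) by lia. reflexivity.
Qed.

Lemma partial_dom x P i1 m : inF P i1 = true ->
  exists m', inF P m' = true /\ (i1 <= m')%nat /\ partial x P m <= partial x P m'.
Proof.
  intros Hi1. unfold inF in *. destruct (fF P) as [k|] eqn:Hk.
  - apply Nat.ltb_lt in Hi1. exists (k - 1)%nat. repeat split.
    + apply Nat.ltb_lt; lia.
    + lia.
    + destruct (le_lt_dec m (k - 1)).
      * apply partial_mono; auto.
      * unfold partial. rewrite (fsum_split _ 0 (k-1) m) by lia.
        rewrite (fsum_opp_zero _ (S (k-1)) m); [lra|].
        intros j Hj. unfold inF. rewrite Hk. replace (j <? k)%nat with false; auto.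
        symmetry. apply Nat.ltb_ge. lia.
  - exists (Nat.max m i1). repeat split; [lia|]. apply partial_mono; lia.
Qed.

Lemma block x N P i0 i1 new :
  normJ x = Finite N -> is_family P -> normI x P = Finite N -> (i0 <= i1)%nat ->
  inF P i1 = true -> List.Forall valid_interval new -> pairwise_disjoint new ->
  (forall J j, In J new -> inF P j = true -> (j < i0 \/ i1 < j)%nat ->
     disjoint_intervals J (fI P j)) ->
  V x new <= fsum (gP x P) i0 i1.
Proof.
  intros HN HP HI Hi Hi1 Hv Hd Hdis.
  set (delta := V x new - fsum (gP x P) i0 i1).
  assert (Step1 : forall m, inF P m = true -> (i1 <= m)%nat -> partial x P m + delta <= N ^ 2).
  { intros m Hm Hm1. rewrite partial_inF by auto.
    set (pre := List.seq 0 i0). set (mid := List.seq i0 (S i1 - i0)).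
    set (post := List.seq (S i1) (m - i1)).
    assert (Hseq : List.seq 0 (S m - 0) = pre ++ mid ++ post).
    { unfold pre, mid, post. replace (S m - 0)%nat with (i0 + ((S i1 - i0) + (m - i1)))%nat by lia.
      rewrite !seq_app. f_equal. f_equal. f_equal. lia. }
    assert (HinF : forall j, (j <= m)%nat -> inF P j = true) by (intros; eapply inF_down; eauto).
    set (G := map (fI P) pre ++ new ++ map (fI P) post).
    assert (HG : V x G <= N ^ 2).
    { apply (VJ x N G HN).
      - unfold G. apply List.Forall_app; split; [|apply List.Forall_app; split; auto];
        apply Forall_valid_map_fam; auto; intros j Hj; apply in_seq in Hj; apply HinF; lia.
      - unfold G. apply PD_app; [| apply PD_app |].
        + apply PD_map_fam; auto; [apply seq_NoDup|]. intros j Hj; apply in_seq in Hj; apply HinF; lia.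
        + auto.
        + apply PD_map_fam; auto; [apply seq_NoDup|]. intros j Hj; apply in_seq in Hj; apply HinF; lia.
        + intros I J HI' HJ'. apply in_map_iff in HJ' as [j [<- Hj]]. apply in_seq in Hj.
          apply Hdis; auto. apply HinF; lia. lia.
        + intros I J HI' HJ'. apply in_map_iff in HI' as [j [<- Hj]]. apply in_seq in Hj.
          apply in_app_or in HJ' as [HJ'|HJ'].
          * apply disjoint_sym. apply Hdis; auto. apply HinF; lia. lia.
          * apply in_map_iff in HJ' as [j' [<- Hj']]. apply in_seq in Hj'.
            apply fam_disj; auto; try apply HinF; lia. }
    unfold G in HG. rewrite !V_app, !V_map in HG.
    unfold delta. rewrite fsum_eq, Hseq, !map_app, !sumlist_app. rewrite fsum_eq in *.
    fold mid. unfold gP in *. lra. }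
  destruct (Rle_or_lt delta 0) as [Hd0|Hd0].
  - unfold delta in Hd0. lra.
  - exfalso.
    assert (Hall : forall m, partial x P m <= N ^ 2 - delta).
    { intros m. destruct (partial_dom x P i1 m Hi1) as [m' [H1 [H2 H3]]].
      specialize (Step1 m' H1 H2). lra. }
    pose proof (Hall 0%nat) as H0. pose proof (partial_nonneg x P 0).
    unfold normI in HI.
    match type of HI with Lub_Rbar ?E = _ => pose proof (Lub_Rbar_correct E) as [_ HL]; rewrite HI in HL end.
    specialize (HL (Finite (sqrt (N ^ 2 - delta)))).
    assert (Hub : Rbar_le (Finite N) (Finite (sqrt (N ^ 2 - delta)))).
    { apply HL. intros r [m ->]. simpl. apply sqrt_le_1_alt. apply Hall. }
    change (N <= sqrt (N ^ 2 - delta)) in Hub. pose proof (normJ_nonneg x N HN).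
    assert (N ^ 2 <= N ^ 2 - delta).
    { rewrite <- (pow2_sqrt (N ^ 2 - delta)) by lra. apply pow_incr. split; lra. }
    lra.
Qed.

Lemma sum_f_R0_fsum x a n : sum_f_R0 (fun k => x (a + k)%nat) n = fsum x a (a + n).
Proof.
  induction n as [|n IH].
  - simpl. rewrite Nat.add_0_r, fsum_single. reflexivity.
  - simpl. rewrite IH. replace (a + S n)%nat with (S (a + n)) by lia.
    rewrite fsum_last by lia. reflexivity.
Qed.

Lemma sum_n_m_fsum x a n m : sum_n_m (fun k => x (a + k)%nat) n m = fsum x (a + n) (a + m).
Proof.
  destruct (le_lt_dec n m) as [H|H].
  - induction m as [|m IH].
    + assert (n = 0%nat) by lia. subst. rewrite sum_n_n, fsum_single. reflexivity.
    + destruct (Nat.eq_dec n (S m)) as [->|Hne].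
      * rewrite sum_n_n, fsum_single. reflexivity.
      * rewrite sum_n_Sm by lia. rewrite IH by lia.
        replace (a + S m)%nat with (S (a + m)) by lia. rewrite fsum_last by lia. reflexivity.
  - rewrite sum_n_m_zero by auto. rewrite fsum_empty by lia. reflexivity.
Qed.

Lemma build_many x a eps : 0 < eps ->
  (forall N0 : nat, exists n m, (N0 <= n)%nat /\ (N0 <= m)%nat /\ eps <= Rabs (fsum x (a + n) (a + m))) ->
  forall k : nat, exists l B, pairwise_disjoint l /\ List.Forall valid_interval l /\
    (forall I, In I l -> exists e, hi I = Some e /\ (e < B)%nat) /\ INR k * eps ^ 2 <= V x l.
Proof.
  intros Heps H. induction k as [|k IH].
  - exists nil, 0%nat. repeat split; [apply PD_nil|constructor|intros I []|]. rewrite V_nil. simpl. lra.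
  - destruct IH as [l [B [H1 [H2 [H3 H4]]]]].
    destruct (H B) as [n [m [Hn [Hm He]]]].
    assert (Hnm : (n <= m)%nat).
    { destruct (le_lt_dec n m); auto. rewrite fsum_empty in He by lia. rewrite Rabs_R0 in He. lra. }
    exists (mkInterval (a + n)%nat (Some (a + m)%nat) :: l), (S (a + m)).
    repeat split.
    + apply PD_cons; auto. intros J HJ. destruct (H3 J HJ) as [e [He1 He2]].
      apply disjoint_sym. eapply disjoint_lt; eauto. simpl. lia.
    + constructor; auto. unfold valid_interval. simpl. lia.
    + intros I [<-|HI]; [exists (a + m)%nat; simpl; split; auto|].
      destruct (H3 I HI) as [e [He1 He2]]. exists e. split; auto. lia.
    + rewrite V_cons, S_INR. unfold isum. simpl hi. simpl lo.
      assert (eps ^ 2 <= Rabs (fsum x (a + n) (a + m)) ^ 2) by (apply pow_incr; lra).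
      lra.
Qed.

Lemma conv x N a : normJ x = Finite N -> ex_series (fun n => x (a + n)%nat).
Proof.
  intros HN. apply (@ex_series_Cauchy R_AbsRing R_CompleteNormedModule). intros eps.
  destruct (classic (exists N0, forall n m, (N0 <= n)%nat -> (N0 <= m)%nat ->
     norm (sum_n_m (fun n => x (a + n)%nat) n m) < eps)) as [Hc|Hc]; auto.
  exfalso.
  assert (Hb : forall N0 : nat, exists n m, (N0 <= n)%nat /\ (N0 <= m)%nat /\
     eps <= Rabs (fsum x (a + n) (a + m))).
  { intros N0. apply NNPP. intros Hn. apply Hc. exists N0. intros n m H1 H2.
    rewrite sum_n_m_fsum. apply Rnot_le_lt. intros Hle. apply Hn. exists n, m. repeat split; auto. }
  pose proof (cond_pos eps) as Hpos.
  assert (He2 : 0 < eps ^ 2) by (apply pow_lt; auto).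
  destruct (nfloor_ex (N ^ 2 / eps ^ 2)) as [k Hk].
  { apply Rdiv_le_0_compat; [apply pow2_ge_0|auto]. }
  destruct (build_many x a eps Hpos Hb (S k)) as [l [B [H1 [H2 [_ H4]]]]].
  pose proof (VJ x N l HN H2 H1). rewrite S_INR in H4.
  assert (N ^ 2 < (INR k + 1) * eps ^ 2).
  { destruct Hk as [_ Hk]. apply Rmult_lt_compat_r with (r := eps ^ 2) in Hk; auto.
    unfold Rdiv in Hk. rewrite Rmult_assoc, Rinv_l in Hk by lra. lra. }
  lra.
Qed.

Lemma isum_split x N a b h : normJ x = Finite N -> (a <= S b)%nat ->
  (match h with Some e => (b <= e)%nat | None => True end) ->
  isum x (mkInterval a h) = fsum x a b + isum x (mkInterval (S b) h).
Proof.
  intros HN Hab Hh. unfold isum. simpl. destruct h as [e|].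
  - apply fsum_split; auto.
  - destruct (Nat.eq_dec a (S b)) as [->|Hne].
    + rewrite fsum_empty by lia. rewrite Rplus_0_l. reflexivity.
    + rewrite (Series_incr_n _ (S b - a)) by (lia || apply (conv x N a HN)).
      replace (Init.Nat.pred (S b - a)) with (b - a)%nat by lia.
      rewrite sum_f_R0_fsum. replace (a + (b - a))%nat with b by lia.
      f_equal. apply Series_ext. intros n. f_equal. lia.
Qed.

Local Open Scope bool_scope.
Local Open Scope R_scope.
Definition sq (x : seqR) (k : nat) : R := x k ^ 2.

Definition inb (I : interval) (k : nat) : bool :=
  (lo I <=? k)%nat && (match hi I with Some m => (k <=? m)%nat | None => true end).

Lemma inb_true I k : inb I k = true -> in_interval I k.
Proof.
  unfold inb, in_interval. intros H. apply andb_prop in H as [H1 H2].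
  apply Nat.leb_le in H1. split; auto. destruct (hi I); auto. apply Nat.leb_le; auto.
Qed.

Lemma fsum_ind g a b u v : (u <= a)%nat -> (b <= v)%nat ->
  fsum g a b = fsum (fun k => if (a <=? k)%nat && (k <=? b)%nat then g k else 0) u v.
Proof.
  intros Hu Hv. destruct (le_lt_dec a b) as [Hab|Hab].
  - rewrite (fsum_split _ u b v) by lia.
    rewrite (fsum_opp_zero _ (S b) v).
    2:{ intros k Hk. replace (k <=? b)%nat with false; [rewrite Bool.andb_false_r; auto|].
        symmetry; apply Nat.leb_gt; lia. }
    rewrite Rplus_0_r.
    destruct (Nat.eq_dec u a) as [->|Hne].
    + apply fsum_ext. intros k Hk. replace ((a <=? k)%nat && (k <=? b)%nat) with true; auto.
      symmetry. apply andb_true_intro; split; apply Nat.leb_le; lia.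
    + destruct a as [|a']; [lia|].
      rewrite (fsum_split _ u a' b) by lia.
      rewrite (fsum_opp_zero _ u a').
      2:{ intros k Hk. replace (S a' <=? k)%nat with false; auto. symmetry; apply Nat.leb_gt; lia. }
      rewrite Rplus_0_l. apply fsum_ext. intros k Hk.
      replace ((S a' <=? k)%nat && (k <=? b)%nat) with true; auto.
      symmetry. apply andb_true_intro; split; apply Nat.leb_le; lia.
  - rewrite fsum_empty by auto. symmetry. apply fsum_opp_zero. intros k Hk.
    destruct (a <=? k)%nat eqn:E1; destruct (k <=? b)%nat eqn:E2; auto.
    apply Nat.leb_le in E1. apply Nat.leb_le in E2. lia.
Qed.

Lemma sumlist_fsum_exchange {A} (h : A -> nat -> R) l u v :
  sumlist (map (fun I => fsum (h I) u v) l) = fsum (fun k => sumlist (map (fun I => h I k) l)) u v.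
Proof.
  induction l as [|I l IH]; simpl.
  - symmetry. apply fsum_zero.
  - unfold sumlist at 1. simpl. fold (sumlist (map (fun I => fsum (h I) u v) l)). rewrite IH.
    rewrite <- fsum_plus. apply fsum_ext. intros. reflexivity.
Qed.

Lemma pointwise_le l k y : pairwise_disjoint l -> 0 <= y ->
  sumlist (map (fun I => if inb I k then y else 0) l) <= y.
Proof.
  induction l as [|I l IH]; intros Hd Hy; simpl; unfold sumlist; simpl; [lra|].
  apply PD_cons_inv in Hd as [Hd1 Hd2].
  fold (sumlist (map (fun I => if inb I k then y else 0) l)).
  destruct (inb I k) eqn:E.
  - rewrite (sumlist_map_ext _ (fun _ => 0)), sumlist_map_zero; [lra|].
    intros J HJ. destruct (inb J k) eqn:E2; auto. exfalso.
    apply (Hd2 J HJ k). split; apply inb_true; auto.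
  - specialize (IH Hd1 Hy). lra.
Qed.

Definition Qi (x : seqR) (I : interval) : R :=
  match hi I with Some m => fsum (sq x) (lo I) m | None => 0 end.

Lemma sumQ x l u v : pairwise_disjoint l ->
  (forall I, In I l -> (u <= lo I)%nat /\ exists m, hi I = Some m /\ (m <= v)%nat) ->
  sumlist (map (Qi x) l) <= fsum (sq x) u v.
Proof.
  intros Hd Hl.
  rewrite (sumlist_map_ext _ (fun I => fsum (fun k => if inb I k then sq x k else 0) u v)).
  - rewrite sumlist_fsum_exchange. apply fsum_le. intros k. apply pointwise_le; auto.
    unfold sq. apply pow2_ge_0.
  - intros I HI. destruct (Hl I HI) as [H1 [m [H2 H3]]]. unfold Qi, inb. rewrite H2.
    apply fsum_ind; auto.
Qed.

Lemma V_eq x l : V x l = sumlist (map (fun I => (Rabs (isum x I))^2) l).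
Proof. induction l; [reflexivity|]. rewrite V_cons, IHl. reflexivity. Qed.

Lemma V_le_Q x l u v : pairwise_disjoint l ->
  (forall I, In I l -> (u <= lo I)%nat /\ exists m, hi I = Some m /\ (m <= v)%nat) ->
  (forall a b, (u <= a)%nat -> (b <= v)%nat -> (fsum x a b)^2 <= fsum (sq x) a b) ->
  V x l <= fsum (sq x) u v.
Proof.
  intros Hd Hl Hk. eapply Rle_trans; [|apply (sumQ x l u v Hd Hl)].
  rewrite V_eq. apply sumlist_map_le. intros I HI.
  destruct (Hl I HI) as [H1 [m [H2 H3]]]. unfold Qi, isum. rewrite H2. rewrite pow2_abs.
  apply Hk; auto.
Qed.

Lemma least_ex (Pr : nat -> Prop) : (exists n, Pr n) -> exists n, Pr n /\ forall m, (m < n)%nat -> ~ Pr m.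
Proof.
  intros [n Hn]. revert Hn. induction n as [n IH] using lt_wf_ind. intros Hn.
  destruct (classic (exists m, (m < n)%nat /\ Pr m)) as [[m [Hm1 Hm2]]|Hno].
  - apply (IH m Hm1 Hm2).
  - exists n. split; auto. intros m Hm HP. apply Hno. eauto.
Qed.

Lemma max_ex (Pr : nat -> Prop) B j0 : Pr j0 -> (forall j, Pr j -> (j <= B)%nat) ->
  exists j, Pr j /\ forall j', Pr j' -> (j' <= j)%nat.
Proof.
  revert j0. induction B as [|B IH]; intros j0 H0 Hb.
  - exists j0. split; auto. intros j' Hj'. specialize (Hb j' Hj'). lia.
  - destruct (classic (Pr (S B))) as [HS|HS].
    + exists (S B). split; auto.
    + apply (IH j0); auto. intros j Hj. specialize (Hb j Hj).
      destruct (Nat.eq_dec j (S B)) as [->|]; [contradiction|lia].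
Qed.

Lemma part_lo_supp x P j : x_norming_partition x P -> inF P j = true -> supp x (lo (fI P j)).
Proof.
  intros [_ [H2 H3]] Hj. destruct (inF P (S j)) eqn:E.
  - apply (H2 j E).
  - unfold inF in E, Hj. destruct (fF P) as [k|] eqn:Hk; [|discriminate].
    apply Nat.ltb_lt in Hj. apply Nat.ltb_ge in E.
    destruct (H3 k eq_refl) as [H _]. replace j with (k - 1)%nat by lia. auto.
Qed.

Lemma fam_lo_mono P i j : is_family P -> (i <= j)%nat -> inF P j = true ->
  (lo (fI P i) <= lo (fI P j))%nat.
Proof.
  intros HP Hij Hj. destruct (Nat.eq_dec i j) as [->|Hne]; [lia|].
  destruct (fam_order P i j HP ltac:(lia) Hj) as [m [H1 H2]].
  pose proof (fam_valid P i HP (inF_down P i j Hj Hij)) as Hv. unfold valid_interval in Hv.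
  rewrite H1 in Hv. lia.
Qed.

Lemma disj_left J K m : hi K = Some m -> (m < lo J)%nat -> disjoint_intervals J K.
Proof. intros. apply disjoint_sym. eapply disjoint_lt; eauto. Qed.

Lemma sign_lemma A D U W xp T : 0 < D * U -> 0 <= W * U -> 0 <= A * xp -> 0 < xp * T ->
  xp + T = D + U -> 0 <= W * (A + D).
Proof.
  intros H1 H2 H3 H4 H5.
  destruct (Rtotal_order U 0) as [HU|[HU|HU]].
  - assert (D < 0) by nra. assert (W <= 0) by nra.
    destruct (Rtotal_order xp 0) as [Hx|[Hx|Hx]]; [|subst; nra|nra].
    assert (A <= 0) by nra. nra.
  - subst. nra.
  - assert (0 < D) by nra. assert (0 <= W) by nra.
    destruct (Rtotal_order xp 0) as [Hx|[Hx|Hx]]; [nra|subst; nra|].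
    assert (0 <= A) by nra. nra.
Qed.

Lemma key_step x N p q :
  normJ x = Finite N -> separated_by_partitions x -> (p < q)%nat -> x p <> 0 -> x q <> 0 ->
  (forall a b, (p <= a)%nat -> (b <= q)%nat -> (b - a < q - p)%nat -> (fsum x a b)^2 <= fsum (sq x) a b) ->
  (fsum x p q)^2 <= fsum (sq x) p q.
Proof.
  intros HN Hsep Hpq Hxp Hxq IH.
  apply Rnot_lt_le. intros Hc.
  assert (Hpre : forall c, (p < c <= q)%nat -> 0 < fsum x p (pred c) * fsum x c q).
  { intros c Hc'.
    pose proof (fsum_split x p (pred c) q ltac:(lia) ltac:(lia)) as E1.
    pose proof (fsum_split (sq x) p (pred c) q ltac:(lia) ltac:(lia)) as E2.
    replace (S (pred c)) with c in E1, E2 by lia.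
    pose proof (IH p (pred c) ltac:(lia) ltac:(lia) ltac:(lia)).
    pose proof (IH c q ltac:(lia) ltac:(lia) ltac:(lia)).
    rewrite E1, E2 in Hc. nra. }
  destruct (least_ex (fun n => (p < n)%nat /\ supp x n)) as [n2 [[Hpn2 Hn2] Hlst]].
  { exists q. split; auto. }
  assert (Hn2q : (n2 <= q)%nat).
  { destruct (le_lt_dec n2 q); auto. exfalso. apply (Hlst q); auto. }
  assert (Hgap : forall n, (p < n < n2)%nat -> ~ supp x n).
  { intros n Hn Hs. apply (Hlst n); [lia|]. split; [lia|auto]. }
  destruct (Hsep p n2 Hxp Hn2 Hpn2 Hgap) as [P [Hpart [i [j [Hi [Hj [Hij [Hpi Hn2j]]]]]]]].
  pose proof Hpart as [[HP HI] [Hcl2 Hcl3]].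
  rewrite HN in HI.
  assert (Hij' : (i < j)%nat).
  { destruct (Nat.lt_total i j) as [H|[H|H]]; auto; [contradiction|].
    destruct (fam_order P j i HP H Hi) as [m [Hm1 Hm2]].
    destruct Hn2j as [_ Hn2j]. rewrite Hm1 in Hn2j. destruct Hpi as [Hpi _]. lia. }
  assert (HiS : inF P (S i) = true) by (apply (inF_down P (S i) j); auto).
  assert (Hhi : hi (fI P i) = Some p).
  { destruct (Hcl2 i HiS) as [_ [m [Hm1 Hm2]]].
    destruct (fam_order P i j HP Hij' Hj) as [m' [Hm'1 Hm'2]].
    rewrite Hm1 in Hm'1. injection Hm'1 as <-.
    destruct Hpi as [_ Hpi]. rewrite Hm1 in Hpi. destruct Hn2j as [Hn2j _].
    rewrite Hm1. f_equal. destruct (Nat.eq_dec m p); auto. exfalso. apply (Hgap m); auto. lia. }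
  set (a := lo (fI P i)).
  assert (Hap : (a <= p)%nat) by (destruct Hpi; unfold a; lia).
  assert (Hsi : isum x (fI P i) = fsum x a p) by (unfold isum; rewrite Hhi; reflexivity).
  set (s := fsum x a p).
  destruct (max_ex (fun j' => inF P j' = true /\ (S i <= j')%nat /\ (lo (fI P j') <= q)%nat) q (S i))
    as [i1 [[Hi1 [Hi1a Hi1b]] Hmax]].
  { split; auto. split; auto. pose proof (fam_lo_mono P (S i) j HP Hij' Hj).
    destruct Hn2j as [Hn2j _]. lia. }
  { intros j' [H1 [_ H3]]. pose proof (fam_lo_ge P j' HP H1). lia. }
  set (c := lo (fI P i1)).
  assert (Hpc : (p < c)%nat).
  { destruct (fam_order P i i1 HP ltac:(lia) Hi1) as [m [Hm1 Hm2]]. rewrite Hhi in Hm1.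
    injection Hm1 as <-. unfold c. lia. }
  assert (Hafter : forall j', inF P j' = true -> (i1 < j')%nat -> (q < lo (fI P j'))%nat).
  { intros j' H1 H2. destruct (le_lt_dec (lo (fI P j')) q) as [H3|H3]; auto.
    assert (H4 : (S i <= j')%nat) by lia.
    specialize (Hmax j' (conj H1 (conj H4 H3))). lia. }
  assert (Hbefore : forall j', inF P j' = true -> (j' < i)%nat -> exists m, hi (fI P j') = Some m /\ (m < a)%nat).
  { intros j' H1 H2. apply (fam_order P j' i HP H2 Hi). }
  assert (HJlo : forall j', (S i <= j')%nat -> (j' <= i1)%nat -> (p < lo (fI P j'))%nat).
  { intros j' H1 H2. destruct (fam_order P i j' HP ltac:(lia) (inF_down P j' i1 Hi1 H2)) as [m [Hm1 Hm2]].
    rewrite Hhi in Hm1. injection Hm1 as <-. lia. }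
  assert (HJhi : forall j', (j' < i1)%nat -> exists m, hi (fI P j') = Some m /\ (m < c)%nat).
  { intros j' H1. apply (fam_order P j' i1 HP H1 Hi1). }
  assert (HA : 0 <= (s - x p) * x p).
  { destruct (Nat.eq_dec a p) as [Hap'|Hap'].
    - unfold s. rewrite Hap', fsum_single. nra.
    - pose proof (block x N P i i (mkInterval a (Some (pred p)) :: mkInterval p (Some p) :: nil)
        HN HP HI ltac:(lia) Hi) as HB.
      rewrite (fsum_single (gP x P)) in HB. unfold gP in HB. rewrite Hsi in HB.
      rewrite !V_cons, V_nil in HB. unfold isum in HB. cbn [lo hi] in HB.
      rewrite !pow2_abs in HB.
      assert (Es : s = fsum x a (pred p) + x p).
      { unfold s. rewrite (fsum_split x a (pred p) p) by lia. replace (S (pred p)) with p by lia.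
        rewrite fsum_single. reflexivity. }
      rewrite fsum_single in HB. fold s in HB.
      assert (HB' : fsum x a (pred p) ^ 2 + x p ^ 2 <= s ^ 2).
      { eapply Rle_trans; [|apply HB]; [lra| | |].
        - repeat constructor; unfold valid_interval; simpl; lia.
        - apply PD_cons; [|apply PD_cons; [intros J []|apply PD_nil]].
          intros J [<-|[]]. eapply disjoint_lt; simpl; eauto. lia.
        - intros J j' HJ Hj' Hj'r. destruct Hj'r as [Hj'r|Hj'r].
          + destruct (Hbefore j' Hj' Hj'r) as [m [Hm1 Hm2]].
            destruct HJ as [<-|[<-|[]]]; eapply disj_left; eauto; simpl; lia.
          + destruct (fam_order P i j' HP Hj'r Hj') as [m [Hm1 Hm2]]. rewrite Hhi in Hm1.
            injection Hm1 as <-.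
            destruct HJ as [<-|[<-|[]]]; eapply disjoint_lt; simpl; eauto; lia. }
      rewrite Es in HB' |- *. nra. }
  set (T := fsum x (S p) q).
  assert (ES : fsum x p q = x p + T) by (unfold T; rewrite fsum_first by lia; reflexivity).
  assert (EQ : fsum (sq x) p q = x p ^ 2 + fsum (sq x) (S p) q) by (rewrite fsum_first by lia; reflexivity).
  assert (HxT : 0 < x p * T).
  { pose proof (Hpre (S p) ltac:(lia)) as H. simpl pred in H. rewrite fsum_single in H. exact H. }
  assert (K0 : fsum (sq x) (S p) q < 2 * s * T + T ^ 2).
  { assert (H1 : 0 <= (s - x p) * x p * (x p * T)) by (apply Rmult_le_pos; lra).
    assert (H2 : 0 < x p * x p) by (apply Rsqr_pos_lt; auto).
    assert (H3 : 0 <= (s - x p) * T).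
    { replace ((s - x p) * x p * (x p * T)) with (((s - x p) * T) * (x p * x p)) in H1 by ring.
      destruct (Rle_or_lt 0 ((s - x p) * T)) as [H|H]; auto. nra. }
    rewrite ES, EQ in Hc. nra. }
  assert (Hgi : gP x P i = s ^ 2) by (unfold gP; rewrite Hsi, pow2_abs; reflexivity).
  assert (Eblk : fsum (gP x P) i i1 = s ^ 2 + fsum (gP x P) (S i) (pred i1) + gP x P i1).
  { rewrite fsum_first by lia. rewrite (fsum_split _ (S i) (pred i1) i1) by lia.
    replace (S (pred i1)) with i1 by lia. rewrite fsum_single, Hgi. ring. }
  assert (Hmid : fsum (gP x P) (S i) (pred i1) <= fsum (sq x) (S p) (pred c)).
  { assert (E : fsum (gP x P) (S i) (pred i1) = V x (map (fI P) (List.seq (S i) (i1 - S i)))).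
    { rewrite V_map, fsum_eq. replace (S (pred i1) - S i)%nat with (i1 - S i)%nat by lia. reflexivity. }
    rewrite E. apply V_le_Q.
    - apply PD_map_fam; auto. apply seq_NoDup. intros j' Hj'. apply in_seq in Hj'.
      apply (inF_down P j' i1); auto; lia.
    - intros I HI'. apply in_map_iff in HI' as [j' [<- Hj']]. apply in_seq in Hj'. split.
      + pose proof (HJlo j' ltac:(lia) ltac:(lia)). lia.
      + destruct (HJhi j' ltac:(lia)) as [m [Hm1 Hm2]]. exists m. split; auto. lia.
    - intros a' b' Ha' Hb'. apply IH; lia. }
  assert (EQc : fsum (sq x) (S p) q = fsum (sq x) (S p) (pred c) + fsum (sq x) c q).
  { rewrite (fsum_split _ (S p) (pred c) q) by lia. replace (S (pred c)) with c by lia. reflexivity. }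
  assert (EJ : fI P i1 = mkInterval c (hi (fI P i1))) by (unfold c; destruct (fI P i1); reflexivity).
  assert (Hvnew1 : forall J j', lo J = a -> In J (mkInterval a (Some q) :: nil) -> inF P j' = true ->
     (j' < i \/ i1 < j')%nat -> disjoint_intervals J (fI P j')).
  { intros J j' _ HJ Hj' Hr. destruct HJ as [<-|[]]. destruct Hr as [Hr|Hr].
    - destruct (Hbefore j' Hj' Hr) as [m [Hm1 Hm2]]. eapply disj_left; eauto.
    - eapply disjoint_lt; simpl; eauto. }
  assert (Fas : fsum x a q = s + T).
  { unfold s, T. apply fsum_split; lia. }
  assert (C2 : forall hJ, hi (fI P i1) = hJ -> (match hJ with Some e => (q < e)%nat | None => True end) -> False).
  { intros hJ EhJ Hh.
    set (W := isum x (mkInterval (S q) hJ)).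
    set (U := fsum x c q).
    assert (Hgi1 : gP x P i1 = (U + W) ^ 2).
    { unfold gP. rewrite EJ, EhJ. rewrite (isum_split x N c q hJ HN) by (lia || (destruct hJ; lia || auto)).
      rewrite pow2_abs. reflexivity. }
    assert (HU : U ^ 2 <= fsum (sq x) c q) by (apply IH; lia).
    assert (HDU : 0 < fsum x p (pred c) * U) by (apply Hpre; lia).
    assert (ESD : fsum x p q = fsum x p (pred c) + U).
    { unfold U. rewrite (fsum_split x p (pred c) q) by lia. replace (S (pred c)) with c by lia. reflexivity. }
    assert (Hend : forall l0 j', inF P j' = true -> (i1 < j')%nat -> disjoint_intervals (mkInterval l0 hJ) (fI P j')).
    { intros l0 j' Hj' Hr. destruct hJ as [e|].
      - destruct (fam_order P i1 j' HP Hr Hj') as [m [Hm1 Hm2]]. rewrite EhJ in Hm1. injection Hm1 as <-.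
        eapply disjoint_lt; simpl; eauto.
      - exfalso. destruct HP as [_ [_ H3]]. destruct (H3 i1 (inF_down P (S i1) j' Hj' Hr)) as [m [Hm _]].
        rewrite EhJ in Hm. discriminate. }
    assert (Hvh : match hJ with Some e => (S q <= e)%nat | None => True end) by (destruct hJ; auto).
    destruct (Rle_or_lt 0 (W * U)) as [HWU|HWU].
    - pose proof (block x N P i i1 (mkInterval a hJ :: nil) HN HP HI ltac:(lia) Hi1) as HB.
      rewrite Eblk, Hgi1, V_cons, V_nil in HB.
      rewrite (isum_split x N a q hJ HN) in HB by (lia || (destruct hJ; lia || auto)).
      rewrite Fas, pow2_abs in HB. fold W in HB.
      assert (HB' : (s + T + W) ^ 2 <= s ^ 2 + fsum (gP x P) (S i) (pred i1) + (U + W) ^ 2).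
      { eapply Rle_trans; [|apply HB]; [lra| | |].
        - repeat constructor. unfold valid_interval; simpl. destruct hJ; lia || auto.
        - apply PD_cons; [intros J []|apply PD_nil].
        - intros J j' [<-|[]] Hj' [Hr|Hr].
          + destruct (Hbefore j' Hj' Hr) as [m [Hm1 Hm2]]. eapply disj_left; eauto.
          + apply Hend; auto. }
      pose proof (sign_lemma (s - x p) (fsum x p (pred c)) U W (x p) T HDU HWU HA HxT
                    ltac:(rewrite <- ES, <- ESD; reflexivity)) as Hsg.
      assert (Hid : (s + T + W) ^ 2 - s ^ 2 - (U + W) ^ 2 =
                    2 * s * T + T ^ 2 - U ^ 2 + 2 * (W * ((s - x p) + (x p + T - U)))) by ring.
      assert (Hid2 : x p + T - U = fsum x p (pred c)) by (rewrite <- ES, ESD; ring).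
      rewrite Hid2 in Hid. lra.
    - pose proof (block x N P i i1 (mkInterval a (Some q) :: mkInterval (S q) hJ :: nil) HN HP HI ltac:(lia) Hi1) as HB.
      rewrite Eblk, Hgi1, !V_cons, V_nil in HB.
      unfold isum at 1 in HB. cbn [lo hi] in HB. fold W in HB.
      rewrite Fas, !pow2_abs in HB.
      assert (HB' : (s + T) ^ 2 + W ^ 2 <= s ^ 2 + fsum (gP x P) (S i) (pred i1) + (U + W) ^ 2).
      { eapply Rle_trans; [|apply HB]; [lra| | |].
        - repeat constructor; unfold valid_interval; simpl; [lia|]. destruct hJ; lia || auto.
        - apply PD_cons; [|apply PD_cons; [intros J []|apply PD_nil]].
          intros J [<-|[]]. eapply disjoint_lt; simpl; eauto.
        - intros J j' HJ Hj' [Hr|Hr].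
          + destruct (Hbefore j' Hj' Hr) as [m [Hm1 Hm2]].
            destruct HJ as [<-|[<-|[]]]; eapply disj_left; eauto; simpl; lia.
          + destruct HJ as [<-|[<-|[]]].
            * eapply disjoint_lt; simpl; eauto.
            * apply Hend; auto. }
      assert (Hid : (s + T) ^ 2 + W ^ 2 - s ^ 2 - (U + W) ^ 2 = 2 * s * T + T ^ 2 - U ^ 2 - 2 * (W * U)) by ring.
      lra. }
  destruct (hi (fI P i1)) as [e|] eqn:Ehi.
  - destruct (le_lt_dec e q) as [Heq|Heq]; [|apply (C2 (Some e)); auto].
    assert (Hgi1 : gP x P i1 = (fsum x c e) ^ 2).
    { unfold gP. rewrite EJ. unfold isum. cbn [lo hi]. rewrite pow2_abs. reflexivity. }
    assert (H1 : (fsum x c e) ^ 2 <= fsum (sq x) c q).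
    { eapply Rle_trans; [apply IH; lia|]. apply fsum_mono_r; auto. intros; unfold sq; apply pow2_ge_0. }
    pose proof (block x N P i i1 (mkInterval a (Some q) :: nil) HN HP HI ltac:(lia) Hi1) as HB.
    rewrite Eblk, Hgi1, V_cons, V_nil in HB. unfold isum at 1 in HB. cbn [lo hi] in HB.
    rewrite Fas, pow2_abs in HB.
    assert (HB' : (s + T) ^ 2 <= s ^ 2 + fsum (gP x P) (S i) (pred i1) + fsum x c e ^ 2).
    { eapply Rle_trans; [|apply HB]; [lra| | |].
      - repeat constructor. unfold valid_interval; simpl. lia.
      - apply PD_cons; [intros J []|apply PD_nil].
      - intros J j' HJ Hj' Hr. apply (Hvnew1 J j'); auto. destruct HJ as [<-|[]]; reflexivity. }
    assert (Hid : (s + T) ^ 2 = s ^ 2 + 2 * s * T + T ^ 2) by ring.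
    lra.
  - apply (C2 None); auto.
Qed.

Lemma key x N : normJ x = Finite N -> separated_by_partitions x ->
  forall p q, (fsum x p q)^2 <= fsum (sq x) p q.
Proof.
  intros HN Hsep.
  assert (H : forall n p q, (q - p <= n)%nat -> (fsum x p q)^2 <= fsum (sq x) p q).
  { induction n as [|n IH]; intros p q Hn.
    - destruct (le_lt_dec p q) as [H|H].
      + assert (p = q) by lia. subst. rewrite !fsum_single. unfold sq. lra.
      + rewrite !fsum_empty by auto. lra.
    - destruct (le_lt_dec (q - p) n) as [H|H]; [apply IH; auto|].
      destruct (Req_dec (x p) 0) as [Hp|Hp].
      + rewrite (fsum_first x p q), (fsum_first (sq x) p q) by lia.
        unfold sq at 1. rewrite Hp. replace (0 ^ 2) with 0 by ring. rewrite !Rplus_0_l.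
        apply IH. lia.
      + destruct (Req_dec (x q) 0) as [Hq|Hq].
        * destruct q as [|q']; [lia|].
          rewrite (fsum_last x p q'), (fsum_last (sq x) p q') by lia.
          unfold sq at 2. rewrite Hq. replace (0 ^ 2) with 0 by ring. rewrite !Rplus_0_r.
          apply IH. lia.
        * apply (key_step x N p q HN Hsep ltac:(lia) Hp Hq). intros a b Ha Hb Hab. apply IH. lia. }
  intros p q. apply (H (q - p)%nat). lia.
Qed.

Definition trunc (M : nat) (I : interval) : interval :=
  match hi I with Some _ => I | None => mkInterval (lo I) (Some M) end.

Lemma trunc_sub M I k : in_interval (trunc M I) k -> in_interval I k.
Proof.
  destruct I as [l0 h]. unfold trunc, in_interval. destruct h; simpl; tauto.
Qed.

Lemma PD_map_sub (f : interval -> interval) l : (forall I k, in_interval (f I) k -> in_interval I k) ->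
  pairwise_disjoint l -> pairwise_disjoint (map f l).
Proof.
  intros Hf. induction l as [|I l IH]; intros Hd; simpl; [apply PD_nil|].
  apply PD_cons_inv in Hd as [Hd1 Hd2]. apply PD_cons; auto.
  intros J' HJ'. apply in_map_iff in HJ' as [J [<- HJ]].
  intros k [H1 H2]. apply (Hd2 J HJ k). split; apply Hf; auto.
Qed.

Lemma lim_fsum x N a : normJ x = Finite N ->
  is_lim_seq (fun n => fsum x a n) (Series (fun k => x (a + k)%nat)).
Proof.
  intros HN. apply (is_lim_seq_incr_n _ a).
  apply (is_lim_seq_ext (sum_n (fun k => x (a + k)%nat))).
  - intros n. rewrite sum_n_Reals, sum_f_R0_fsum. f_equal. lia.
  - unfold is_lim_seq. apply Series_correct. apply (conv x N a HN).
Qed.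

Lemma lim_trunc x N l : normJ x = Finite N ->
  is_lim_seq (fun n => V x (map (trunc n) l)) (V x l).
Proof.
  intros HN. induction l as [|I l IH]; simpl map.
  - apply (is_lim_seq_ext (fun _ => 0)); [intros; reflexivity|].
    exact (is_lim_seq_const 0).
  - rewrite V_cons. apply (is_lim_seq_ext (fun n => isum x (trunc n I) * isum x (trunc n I) + V x (map (trunc n) l))).
    { intros n. rewrite V_cons, pow2_abs. ring. }
    rewrite pow2_abs. replace (isum x I ^ 2) with (isum x I * isum x I) by ring.
    apply is_lim_seq_plus'; auto.
    assert (Hh : is_lim_seq (fun n => isum x (trunc n I)) (isum x I)).
    { unfold trunc. destruct (hi I) eqn:E.
      - apply is_lim_seq_const.
      - unfold isum at 2. rewrite E. unfold isum. simpl. apply (lim_fsum x N (lo I) HN). }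
    apply is_lim_seq_mult'; auto.
Qed.

Definition bnd (l : list interval) : nat :=
  fold_right (fun I acc => lo I + (match hi I with Some e => e | None => 0 end) + acc)%nat 0%nat l.

Lemma bnd_spec l I : In I l -> (lo I <= bnd l)%nat /\
  (forall e, hi I = Some e -> (e <= bnd l)%nat).
Proof.
  induction l as [|J l IH]; simpl; [tauto|]. intros [<-|HI].
  - split; [lia|]. intros e ->. lia.
  - destruct (IH HI) as [H1 H2]. split; [lia|]. intros e He. specialize (H2 e He). lia.
Qed.

Lemma upper x N M l : normJ x = Finite N -> separated_by_partitions x ->
  (forall m, fsum (sq x) 0 m <= M) -> pairwise_disjoint l -> V x l <= M.
Proof.
  intros HN Hsep HM Hd.
  set (B0 := bnd l).
  assert (Hb : forall n, V x (map (trunc (n + B0)) l) <= M).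
  { intros n. eapply Rle_trans; [|apply (HM (n + B0 + B0)%nat)].
    apply V_le_Q.
    - apply PD_map_sub; auto. apply trunc_sub.
    - intros I' HI'. apply in_map_iff in HI' as [I [<- HI]].
      destruct (bnd_spec l I HI) as [H1 H2]. unfold trunc. destruct (hi I) as [e|] eqn:E.
      + split; [lia|]. exists e. split; auto. specialize (H2 e eq_refl). fold B0 in H2. lia.
      + simpl. split; [lia|]. exists (n + B0)%nat. split; auto. lia.
    - intros a b _ _. apply (key x N HN Hsep). }
  pose proof (lim_trunc x N l HN) as HL. apply (is_lim_seq_incr_n _ B0) in HL.
  pose proof (is_lim_seq_le _ (fun _ => M) _ _ Hb HL (is_lim_seq_const M)) as H. simpl in H. exact H.
Qed.

Lemma PD_singles L : NoDup L -> pairwise_disjoint (map (fun k => mkInterval k (Some k)) L).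
Proof.
  induction L as [|k L IH]; intros HN; simpl; [apply PD_nil|]. inversion HN; subst.
  apply PD_cons; auto. intros J HJ. apply in_map_iff in HJ as [k' [<- Hk']].
  intros n [[A1 A2] [A3 A4]]. simpl in *. assert (k = k') by lia. subst. contradiction.
Qed.

Lemma V_singles x L : V x (map (fun k => mkInterval k (Some k)) L) = sumlist (map (sq x) L).
Proof.
  rewrite V_map. apply sumlist_map_ext. intros k _. unfold isum. cbn [lo hi]. rewrite fsum_single, pow2_abs.
  reflexivity.
Qed.

Lemma norm2_le x : Rbar_le (norm2 x) (normJ x).
Proof.
  unfold norm2.
  match goal with |- Rbar_le (Lub_Rbar ?E) _ => pose proof (Lub_Rbar_correct E) as [_ HL] end.
  apply HL. intros r [m ->].
  unfold normJ.
  match goal with |- Rbar_le _ (Lub_Rbar ?E) => pose proof (Lub_Rbar_correct E) as [HU _] end.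
  apply HU. exists (map (fun k => mkInterval k (Some k)) (List.seq 0 (S m))). repeat split.
  - simpl. discriminate.
  - apply List.Forall_forall. intros I HI. apply in_map_iff in HI as [k [<- _]]. unfold valid_interval; simpl; lia.
  - apply PD_singles, seq_NoDup.
  - fold (V x (map (fun k => mkInterval k (Some k)) (List.seq 0 (S m)))). rewrite V_singles.
    rewrite fsum_eq. replace (S m - 0)%nat with (S m) by lia. reflexivity.
Qed.

Lemma normJ_eq_norm2 x : inJ x -> separated_by_partitions x -> normJ x = norm2 x.
Proof.
  intros HJ Hsep. unfold inJ, is_finite in HJ.
  set (N := real (normJ x)). assert (HN : normJ x = Finite N) by (symmetry; exact HJ).
  pose proof (norm2_le x) as H1. rewrite HN in H1.
  assert (H0 : Rbar_le (Finite (sqrt (fsum (sq x) 0 0))) (norm2 x)).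
  { unfold norm2.
    match goal with |- Rbar_le _ (Lub_Rbar ?E) => pose proof (Lub_Rbar_correct E) as [HU _] end.
    apply HU. exists 0%nat. reflexivity. }
  destruct (norm2 x) as [s2| |] eqn:E2; simpl in H1, H0; try contradiction.
  assert (Hs2 : 0 <= s2) by (pose proof (sqrt_pos (fsum (sq x) 0 0)); lra).
  assert (HM : forall m, fsum (sq x) 0 m <= s2 ^ 2).
  { intros m. unfold norm2 in E2.
    match type of E2 with Lub_Rbar ?E = _ => pose proof (Lub_Rbar_correct E) as [HU _]; rewrite E2 in HU end.
    specialize (HU (sqrt (fsum (sq x) 0 m)) (ex_intro _ m eq_refl)). simpl in HU.
    assert (0 <= fsum (sq x) 0 m) by (apply fsum_nonneg; intros; unfold sq; apply pow2_ge_0).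
    rewrite <- (pow2_sqrt (fsum (sq x) 0 m)) by auto. apply pow_incr. split; auto. apply sqrt_pos. }
  apply Rbar_le_antisym; [|rewrite HN; exact H1].
  unfold normJ.
  match goal with |- Rbar_le (Lub_Rbar ?E) _ => pose proof (Lub_Rbar_correct E) as [_ HL] end.
  apply HL. intros r [l [_ [_ [Hd ->]]]]. simpl.
  fold (V x l). rewrite <- (sqrt_pow2 s2) by auto. apply sqrt_le_1_alt.
  apply (upper x N); auto.
Qed.

Fixpoint cnt (x : seqR) (n : nat) : nat :=
  match n with
  | O => O
  | S n' => (cnt x n' + (if Req_EM_T (x n') 0 then 0 else 1))%nat
  end.

Lemma cnt_mono x n m : (n <= m)%nat -> (cnt x n <= cnt x m)%nat.
Proof. induction 1; auto. simpl. lia. Qed.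

Lemma cnt_supp_lt x n m : supp x n -> (n < m)%nat -> (cnt x n < cnt x m)%nat.
Proof.
  intros Hs Hnm. apply (Nat.lt_le_trans _ (cnt x (S n))); [|apply cnt_mono; lia].
  simpl. destruct (Req_EM_T (x n) 0); [contradiction|lia].
Qed.

Lemma cnt_inj x n m : supp x n -> supp x m -> cnt x n = cnt x m -> n = m.
Proof.
  intros Hn Hm Hc. destruct (Nat.lt_total n m) as [H|[H|H]]; auto.
  - pose proof (cnt_supp_lt x n m Hn H). lia.
  - pose proof (cnt_supp_lt x m n Hm H). lia.
Qed.

Lemma cnt_surj x N i : (i < cnt x N)%nat -> exists n, (n < N)%nat /\ supp x n /\ cnt x n = i.
Proof.
  induction N as [|N IH]; simpl; intros H; [lia|].
  destruct (Req_EM_T (x N) 0) as [E|E].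
  - destruct (IH ltac:(lia)) as [n [H1 H2]]. exists n. split; [lia|auto].
  - destruct (le_lt_dec (cnt x N) i).
    + exists N. repeat split; auto. lia.
    + destruct (IH l) as [n [H1 H2]]. exists n. split; [lia|auto].
Qed.

Definition enum (x : seqR) (i : nat) : nat :=
  epsilon (inhabits 0%nat) (fun n => supp x n /\ cnt x n = i).

Lemma enum_spec x i : (exists n, supp x n /\ cnt x n = i) -> supp x (enum x i) /\ cnt x (enum x i) = i.
Proof. intros H. unfold enum. apply epsilon_spec. auto. Qed.

Lemma enum_cnt x n : supp x n -> enum x (cnt x n) = n.
Proof.
  intros Hn. destruct (enum_spec x (cnt x n)) as [H1 H2]; [eauto|].
  apply (cnt_inj x); auto.
Qed.

Definition tt (x : seqR) (P : ifamily) (i : nat) : R :=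
  if inF P i then (Rabs (isum x (fI P i)))^2 else 0.

Lemma tt_nonneg x P i : 0 <= tt x P i.
Proof. unfold tt. destruct (inF P i); [apply pow2_ge_0|lra]. Qed.

Lemma sumlist_seq_mono f n n' : (forall k, 0 <= f k) -> (n <= n')%nat ->
  sumlist (map f (List.seq 0 n)) <= sumlist (map f (List.seq 0 n')).
Proof.
  intros Hf H. replace n' with (n + (n' - n))%nat by lia. rewrite seq_app, map_app, sumlist_app.
  pose proof (sumlist_map_nonneg f (List.seq (0 + n) (n' - n)) Hf). lra.
Qed.

Lemma Lub_dom (E1 E2 : R -> Prop) : (forall a, E1 a -> exists b, E2 b /\ a <= b) ->
  (forall b, E2 b -> exists a, E1 a /\ b <= a) -> Lub_Rbar E1 = Lub_Rbar E2.
Proof.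
  intros H1 H2. destruct (Lub_Rbar_correct E1) as [U1 L1]. destruct (Lub_Rbar_correct E2) as [U2 L2].
  apply Rbar_le_antisym.
  - apply L1. intros a Ha. destruct (H1 a Ha) as [b [Hb Hab]].
    apply (Rbar_le_trans _ (Finite b)); [simpl; auto|]. apply U2; auto.
  - apply L2. intros b Hb. destruct (H2 b Hb) as [a [Ha Hab]].
    apply (Rbar_le_trans _ (Finite a)); [simpl; auto|]. apply U1; auto.
Qed.

Lemma singles_ok x P :
  (forall i, fI P i = mkInterval (enum x i) (Some (enum x i))) ->
  (forall i, inF P i = true <-> exists n, supp x n /\ cnt x n = i) ->
  (forall k, fF P = Some k -> (1 <= k)%nat /\ sup_interval (fI P (k - 1)) = sup_nat (supp x)) ->
  (forall n, exists N, sumlist (map (tt x P) (List.seq 0 n)) <= sumlist (map (tt x P) (List.seq 0 (cnt x N)))) ->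
  normJ x = norm2 x ->
  x_norming_partition x P /\
     (forall i, inF P i = true ->
        exists n, supp x n /\ fI P i = mkInterval n (Some n)) /\
     (forall n, supp x n ->
        exists i, inF P i = true /\ fI P i = mkInterval n (Some n)).
Proof.
  intros HfI HK Hfin Hdom Heq.
  assert (Hen : forall i, inF P i = true -> supp x (enum x i) /\ cnt x (enum x i) = i).
  { intros i Hi. apply enum_spec. apply HK; auto. }
  assert (Hfam : is_family P).
  { split; [intros k Hk; apply (Hfin k Hk)|]. split.
    - intros i _. rewrite HfI. unfold valid_interval. simpl. lia.
    - intros i Hi. rewrite !HfI. simpl. exists (enum x i). split; auto.
      destruct (Hen (S i) Hi) as [H1 H2]. destruct (Hen i (inF_down P i (S i) Hi ltac:(lia))) as [H3 H4].
      destruct (le_lt_dec (enum x (S i)) (enum x i)) as [H|H]; auto.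
      pose proof (cnt_mono x _ _ H). lia. }
  assert (Htt : forall i, tt x P i = if inF P i then sq x (enum x i) else 0).
  { intros i. unfold tt. rewrite HfI. unfold isum. cbn [lo hi]. rewrite fsum_single, pow2_abs. reflexivity. }
  assert (Hid : forall N, sumlist (map (tt x P) (List.seq 0 (cnt x N))) = sumlist (map (sq x) (List.seq 0 N))).
  { induction N as [|N IH]; [reflexivity|].
    rewrite (seq_S N 0), map_app, sumlist_app. simpl cnt.
    destruct (Req_EM_T (x N) 0) as [E|E].
    - rewrite Nat.add_0_r, IH. unfold sumlist at 3. simpl. unfold sq. rewrite E. ring.
    - rewrite seq_app, map_app, sumlist_app, IH. unfold sumlist at 2 4. simpl.
      rewrite Htt. replace (inF P (cnt x N)) with true by (symmetry; apply HK; exists N; split; auto).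
      rewrite enum_cnt by auto. ring. }
  assert (HnI : normI x P = norm2 x).
  { unfold normI, norm2. apply Lub_dom.
    - intros a [m ->]. destruct (Hdom (S m)) as [N HN].
      exists (sqrt (fsum (sq x) 0 N)). split; [exists N; reflexivity|].
      apply sqrt_le_1_alt. fold (tt x P). rewrite fsum_eq. replace (S m - 0)%nat with (S m) by lia.
      eapply Rle_trans; [apply HN|]. rewrite Hid. rewrite fsum_eq. replace (S N - 0)%nat with (S N) by lia.
      apply sumlist_seq_mono; [intros; unfold sq; apply pow2_ge_0|lia].
    - intros b [m ->]. exists (sqrt (fsum (tt x P) 0 (cnt x (S m)))). split; [exists (cnt x (S m)); reflexivity|].
      apply sqrt_le_1_alt. rewrite !fsum_eq. replace (S m - 0)%nat with (S m) by lia.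
      rewrite <- Hid. apply sumlist_seq_mono; [apply tt_nonneg|lia]. }
  split; [split; [split; [auto|rewrite HnI; auto]|split]|split].
  - intros i Hi. rewrite HfI. simpl. destruct (Hen i (inF_down P i (S i) Hi ltac:(lia))) as [H1 _].
    split; auto. exists (enum x i). split; auto.
  - intros k Hk. destruct (Hfin k Hk) as [H1 H2]. split; auto.
    rewrite HfI. simpl. apply Hen. unfold inF. rewrite Hk. apply Nat.ltb_lt. lia.
  - intros i Hi. exists (enum x i). split; [apply Hen; auto|apply HfI].
  - intros n Hn. exists (cnt x n). split; [apply HK; eauto|]. rewrite HfI, enum_cnt; auto.
Qed.

Lemma cnt_unbounded x : (forall B, exists n, (B <= n)%nat /\ supp x n) -> forall i, exists N, (i <= cnt x N)%nat.
Proof.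
  intros H. induction i as [|i [N HN]]; [exists 0%nat; lia|].
  destruct (H N) as [m [Hm1 Hm2]]. exists (S m).
  pose proof (cnt_supp_lt x m (S m) Hm2 ltac:(lia)). pose proof (cnt_mono x N m Hm1). lia.
Qed.

Theorem proposition3p12 (x : seqR) :
  (exists n, x n <> 0) -> inJ x -> separated_by_partitions x ->
  (exists P : ifamily,
     x_norming_partition x P /\
     (forall i, inF P i = true ->
        exists n, supp x n /\ fI P i = mkInterval n (Some n)) /\
     (forall n, supp x n ->
        exists i, inF P i = true /\ fI P i = mkInterval n (Some n))) /\
  normJ x = norm2 x.
Proof.
  intros [n0 Hn0] HJ Hsep.
  pose proof (normJ_eq_norm2 x HJ Hsep) as Heq. split; [|exact Heq].
  destruct (classic (exists B, forall n, (B <= n)%nat -> ~ supp x n)) as [[B HB]|Hinf].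
  - set (k := cnt x B).
    assert (HsB : forall n, supp x n -> (n < B)%nat).
    { intros n Hn. destruct (le_lt_dec B n); auto. exfalso. apply (HB n); auto. }
    assert (Hk1 : (1 <= k)%nat) by (pose proof (cnt_supp_lt x n0 B Hn0 (HsB n0 Hn0)); unfold k; lia).
    set (P := mkFamily (Some k) (fun i => mkInterval (enum x i) (Some (enum x i)))).
    assert (HK : forall i, inF P i = true <-> exists n, supp x n /\ cnt x n = i).
    { intros i. unfold inF. simpl. rewrite Nat.ltb_lt. split.
      - intros H. destruct (cnt_surj x B i H) as [n [_ Hn]]. eauto.
      - intros [n [H1 H2]]. subst. apply cnt_supp_lt; auto. }
    exists P. apply singles_ok; auto.
    + intros k' Hk'. simpl in Hk'. injection Hk' as <-. split; auto.
      destruct (enum_spec x (k - 1)) as [He1 He2].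
      { apply HK. unfold inF. simpl. apply Nat.ltb_lt. lia. }
      simpl. symmetry. apply is_lub_Rbar_unique. split.
      * intros r [n [Hs ->]]. simpl. apply le_INR.
        destruct (le_lt_dec n (enum x (k - 1))) as [H|H]; auto.
        pose proof (cnt_supp_lt x _ _ He1 H). pose proof (cnt_supp_lt x n B Hs (HsB n Hs)).
        unfold k in *. lia.
      * intros b Hb. apply Hb. exists (enum x (k - 1)). split; auto.
    + intros n. exists B. fold k.
      destruct (le_lt_dec n k) as [H|H].
      * apply sumlist_seq_mono; auto. apply tt_nonneg.
      * replace n with (k + (n - k))%nat by lia. rewrite seq_app, map_app, sumlist_app.
        rewrite (sumlist_map_ext _ (fun _ => 0) (List.seq (0 + k) (n - k))), sumlist_map_zero; [lra|].
        intros i Hi. apply in_seq in Hi. unfold tt. unfold inF. simpl.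
        replace (i <? k)%nat with false; auto. symmetry. apply Nat.ltb_ge. lia.
  - assert (Hinf' : forall B, exists n, (B <= n)%nat /\ supp x n).
    { intros B. apply NNPP. intros Hn. apply Hinf. exists B. intros n H1 H2. apply Hn. eauto. }
    pose proof (cnt_unbounded x Hinf') as Hunb.
    set (P := mkFamily None (fun i => mkInterval (enum x i) (Some (enum x i)))).
    exists P. apply singles_ok; auto.
    + intros i. unfold inF. simpl. split; auto. intros _.
      destruct (Hunb (S i)) as [N HN]. destruct (cnt_surj x N i ltac:(lia)) as [n [_ Hn]]. eauto.
    + intros k Hk. discriminate.
    + intros n. destruct (Hunb n) as [N HN]. exists N. apply sumlist_seq_mono; auto. apply tt_nonneg.
Qed.
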